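(* Let $1\le k\le d$ and let $\{U_1,\dots,U_k\}$ be a collection of independent open balls in $\mathbb R^d$. Then every interval $[\sigma,\tau]\subseteq 2^{[k]}$ is pierceable at some point in the realization $\{U_1,\dots,U_k\}$.
   Context: For sets $U_1,\dots,U_n\subseteq\mathbb R^d$, the atom of $\sigma\subseteq[n]$ is $\bigcap_{i\in\sigma}U_i\setminus\bigcup_{j\in[n]\setminus\sigma}U_j$ (empty intersection meaning $\mathbb R^d$), and the code of the collection is the set of $\sigma$ with nonempty atom; the collection realizes that code. A collection of open balls $\{U_1,\dots,U_k\}$ is independent if its code is all of $2^{[k]}$. For $\sigma\subseteq\tau$, $[\sigma,\tau]=\{\gamma:\sigma\subseteq\gamma\subseteq\tau\}$. Given a realization $\mathcal U$ of a code $\mathcal C$ in $\mathbb R^d$, an interval $[\sigma,\tau]\subseteq\mathcal C$ is pierceable at $p\in\mathbb R^d$ if the codewords whose atoms meet every sufficiently small neighborhood of $p$ are exactly those in $[\sigma,\tau]$; equivalently, $p$ is a limit point of the atom of every codeword in $[\sigma,\tau]$ and of no other atom. *)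

(* Defs.v *)
From mathcomp Require Import all_boot all_order all_algebra.
From mathcomp Require Import reals.
Set Implicit Arguments. Unset Strict Implicit. Unset Printing Implicit Defensive.
Import Order.TTheory GRing.Theory Num.Theory.
Local Open Scope ring_scope.

Section Defs.
Variables (R : realType) (d : nat).

Definition sqdist (x y : 'rV[R]_d) : R := \sum_(i < d) (x 0 i - y 0 i) ^+ 2.

Definition open_ball (c : 'rV[R]_d) (r : R) : 'rV[R]_d -> Prop :=
  fun x => sqdist x c < r ^+ 2.

Variable n : nat.

Definition atom (U : 'I_n -> 'rV[R]_d -> Prop) (sigma : {set 'I_n})
  (x : 'rV[R]_d) : Prop := forall i : 'I_n, i \in sigma <-> U i x.

Definition code (U : 'I_n -> 'rV[R]_d -> Prop) : {set 'I_n} -> Prop :=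
  fun sigma => exists x, atom U sigma x.

Definition independent (U : 'I_n -> 'rV[R]_d -> Prop) : Prop :=
  forall sigma : {set 'I_n}, code U sigma.

Definition in_interval (sigma tau gamma : {set 'I_n}) : Prop :=
  sigma \subset gamma /\ gamma \subset tau.

(* the atom of gamma meets every (sufficiently small) neighborhood of p,
   i.e. p lies in the closure of the atom *)
Definition atom_near (U : 'I_n -> 'rV[R]_d -> Prop) (gamma : {set 'I_n})
  (p : 'rV[R]_d) : Prop :=
  forall eps : R, 0 < eps -> exists y, atom U gamma y /\ sqdist y p < eps ^+ 2.

Definition pierceable (U : 'I_n -> 'rV[R]_d -> Prop) (sigma tau : {set 'I_n})
  (p : 'rV[R]_d) : Prop :=
  [/\ sigma \subset tau,
      (forall gamma, in_interval sigma tau gamma -> code U gamma) &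
      (forall gamma : {set 'I_n}, code U gamma ->
          (atom_near U gamma p <-> in_interval sigma tau gamma))].

End Defs.

(* Main.v *)
Require Import Defs.
From mathcomp Require Import all_boot all_order all_algebra.
From mathcomp Require Import reals.
From mathcomp.algebra_tactics Require Import ring lra.
Set Implicit Arguments. Unset Strict Implicit. Unset Printing Implicit Defensive.
Import Order.TTheory GRing.Theory Num.Theory.
Local Open Scope ring_scope.

Lemma sqdist_comb (R : realType) (d : nat) (x y c : 'rV[R]_d) (m : R) :
  sqdist (m *: x + (1 - m) *: y) c =
  m * sqdist x c + (1 - m) * sqdist y c - m * (1 - m) * sqdist x y.
Proof.
rewrite /sqdist !mulr_sumr -big_split -sumrB /=; apply: eq_bigr => a _.
rewrite !mxE; ring.
Qed.

Lemma sqdist_shift (R : realType) (d : nat) (w u c : 'rV[R]_d) (t : R) :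
  sqdist (w + t *: u) c = sqdist w c
    + 2 * t * ((\sum_a w 0 a * u 0 a) - \sum_a c 0 a * u 0 a)
    + t ^+ 2 * \sum_a u 0 a ^+ 2.
Proof.
rewrite /sqdist -sumrB !mulr_sumr -!big_split /=; apply: eq_bigr => a _.
rewrite !mxE; ring.
Qed.

Lemma sqdist_shift0 (R : realType) (d : nat) (w u : 'rV[R]_d) (t : R) :
  sqdist (w + t *: u) w = t ^+ 2 * \sum_a u 0 a ^+ 2.
Proof.
rewrite /sqdist !mulr_sumr; apply: eq_bigr => a _.
rewrite !mxE; ring.
Qed.

Lemma sqdist_ge0 (R : realType) (d : nat) (x y : 'rV[R]_d) : 0 <= sqdist x y.
Proof. by apply: sumr_ge0 => a _; apply: sqr_ge0. Qed.

Lemma sqdist_sym (R : realType) (d : nat) (x y : 'rV[R]_d) : sqdist x y = sqdist y x.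
Proof. by apply: eq_bigr => a _; rewrite -sqrrN opprB. Qed.

Lemma sqdist_bounds (R : realType) (d : nat) (y q c : 'rV[R]_d) (e : R) :
  0 < e ->
  (1 - e) * sqdist q c - e^-1 * sqdist y q <= sqdist y c /\
  sqdist y c <= (1 + e) * sqdist q c + (1 + e^-1) * sqdist y q.
Proof.
move=> e0; rewrite /sqdist !mulr_sumr -!sumrB -!big_split /=; split;
  apply: ler_sum => a _; set z := q 0 a - c 0 a; set x := y 0 a - q 0 a;
  have -> : y 0 a - c 0 a = x + z by rewrite /x /z; ring.
- have h : 0 <= e^-1 * (x + e * z) ^+ 2.
    by apply: mulr_ge0; [rewrite invr_ge0 ltW | apply: sqr_ge0].
  have : e^-1 * (x + e * z) ^+ 2 = e^-1 * x ^+ 2 + 2 * x * z + e * z ^+ 2.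
    by field; rewrite gt_eqF.
  move=> E; rewrite E in h.
  have hx : 0 <= x ^+ 2 by apply: sqr_ge0.
  lra.
- have h : 0 <= e^-1 * (x - e * z) ^+ 2.
    by apply: mulr_ge0; [rewrite invr_ge0 ltW | apply: sqr_ge0].
  have : e^-1 * (x - e * z) ^+ 2 = e^-1 * x ^+ 2 - 2 * x * z + e * z ^+ 2.
    by field; rewrite gt_eqF.
  move=> E; rewrite E in h.
  lra.
Qed.

Lemma sqdist_cont (R : realType) (d : nat) (q c : 'rV[R]_d) (g : R) :
  0 < g -> exists2 e : R, 0 < e & forall y, sqdist y q < e ^+ 2 ->
    sqdist q c - g < sqdist y c < sqdist q c + g.
Proof.
move=> g0; set S := sqdist q c.
have S0 : 0 <= S by apply: sqdist_ge0.
have S1 : 0 < S + 1 by lra.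
set eta := g / (2 * (S + 1)).
have eta0 : 0 < eta by rewrite /eta divr_gt0 // mulr_gt0.
have etaS : eta * S < g / 2.
  have -> : eta * S = g / 2 * (S / (S + 1)).
    by rewrite /eta; field; rewrite gt_eqF.
  have t1 : S / (S + 1) < 1.
    by rewrite ltr_pdivrMr // mul1r ltrDl.
  have g2 : 0 < g / 2 by lra.
  by rewrite -[X in _ < X]mulr1 ltr_pM2l.
set Q := g / (2 * (1 + eta^-1)).
have ie0 : 0 < eta^-1 by rewrite invr_gt0.
have ie1 : 0 < 1 + eta^-1 by lra.
have Q0 : 0 < Q by rewrite /Q divr_gt0 // mulr_gt0.
have Q1 : 0 < 1 + Q by lra.
have HQ : (1 + eta^-1) * Q = g / 2.
  have h' : 0 < eta + 1 by lra.
  by rewrite /Q; field; rewrite !gt_eqF.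
exists (Q / (1 + Q)); first by rewrite divr_gt0.
move=> y hy.
have e1 : Q / (1 + Q) <= Q.
  rewrite ler_pdivrMr //; nra.
have e2 : Q / (1 + Q) <= 1.
  rewrite ler_pdivrMr //; lra.
have e3 : 0 <= Q / (1 + Q) by rewrite divr_ge0 // ltW.
have hE : sqdist y q < Q.
  apply: (lt_le_trans hy); rewrite expr2; apply: (le_trans _ e1).
  by rewrite ler_piMr.
have E0 := sqdist_ge0 y q.
have [lo hi] := sqdist_bounds y q c eta0.
have h2 : (1 + eta^-1) * sqdist y q < g / 2.
  by rewrite -HQ ltr_pM2l.
have h1 : eta^-1 * sqdist y q < g / 2.
  have : (1 + eta^-1) * sqdist y q = sqdist y q + eta^-1 * sqdist y q by ring.
  lra.
rewrite -/S in lo hi; apply/andP; split; nra.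
Qed.

Lemma kernel_vec (R : realType) (d k : nat) (c : 'I_k -> 'rV[R]_d) (i0 : 'I_k) :
  (k <= d)%N -> exists2 u : 'rV[R]_d, 0 < \sum_a u 0 a ^+ 2 &
   forall i, \sum_a c i 0 a * u 0 a = \sum_a c i0 0 a * u 0 a.
Proof.
move=> kd.
pose M : 'M[R]_(d, k.-1) := \matrix_(a, j) (c (lift i0 j) 0 a - c i0 0 a).
have rk : (\rank M < d)%N.
  apply: (leq_ltn_trans (rank_leq_col M)).
  have k0 : (0 < k)%N := leq_ltn_trans (leq0n i0) (ltn_ord i0).
  by apply: (@leq_trans k) => //; rewrite ltn_predL.
have Kn0 : kermx M != 0 by rewrite -mxrank_eq0 mxrank_ker subn_eq0 -ltnNge.
have [a Ha] : exists a, row a (kermx M) != 0.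
  case: (pickP (fun a => row a (kermx M) != 0)) => [a Ha|H]; first by exists a.
  case/negP: Kn0; apply/eqP/row_matrixP => a; rewrite row0.
  by move/negbFE/eqP: (H a).
set u := row a (kermx M).
have uM : u *m M = 0 by rewrite /u -row_mul mulmx_ker row0.
exists u.
  have [b Hb] : exists b, u 0 b != 0.
    case: (pickP (fun b => u 0 b != 0)) => [b Hb|H]; first by exists b.
    case/negP: Ha; apply/eqP/matrixP => i j; rewrite mxE (ord1 i).
    by have := H j; rewrite /= /u mxE => /negbFE/eqP ->; rewrite mxE.
  rewrite lt_def sumr_ge0 ?andbT; last by move=> *; apply: sqr_ge0.
  apply/negP => /eqP /psumr_eq0P H.
  have /eqP := H (fun i _ => sqr_ge0 (u 0 i)) b isT.
  by rewrite sqrf_eq0 (negbTE Hb).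
move=> i; case: (unliftP i0 i) => [j ->|->] //.
have := congr1 (fun A : 'M[R]_(1, k.-1) => A 0 j) uM; rewrite !mxE => E.
apply/eqP; rewrite -subr_eq0 -sumrB -[X in _ == X]E; apply/eqP.
apply: eq_bigr => b _; rewrite !mxE; ring.
Qed.

Lemma realize_aux (R : realType) (d k : nat) (c : 'I_k -> 'rV[R]_d) (i0 : 'I_k)
  (u w : 'rV[R]_d) (dl : R) :
  0 < \sum_a u 0 a ^+ 2 ->
  (forall i, \sum_a c i 0 a * u 0 a = \sum_a c i0 0 a * u 0 a) ->
  0 <= (\sum_a w 0 a * u 0 a) - \sum_a c i0 0 a * u 0 a ->
  0 <= dl ->
  exists w', (forall i, sqdist w' (c i) = sqdist w (c i) + dl) /\ sqdist w' w <= dl.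
Proof.
set A := \sum_a u 0 a ^+ 2; set B := _ - _ => A0 ker B0 dl0.
have q0 : 0 <= B ^+ 2 + A * dl.
  by apply: addr_ge0; [apply: sqr_ge0 | apply: mulr_ge0 => //; apply: ltW].
set s := Num.sqrt (B ^+ 2 + A * dl).
have s0 : 0 <= s by apply: sqrtr_ge0.
have ss : s ^+ 2 = B ^+ 2 + A * dl by rewrite sqr_sqrtr.
have sB : B <= s by nra.
set t := (s - B) / A.
have t0 : 0 <= t by apply: divr_ge0; [lra | apply: ltW].
have E : 2 * t * B + t ^+ 2 * A = dl.
  have -> : 2 * t * B + t ^+ 2 * A = (s ^+ 2 - B ^+ 2) / A.
    by rewrite /t; field; rewrite gt_eqF.
  by rewrite ss; field; rewrite gt_eqF.
exists (w + t *: u); split.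
  by move=> i; rewrite sqdist_shift ker -/B -/A -addrA E.
rewrite sqdist_shift0 -/A; nra.
Qed.

Lemma realize (R : realType) (d k : nat) (c : 'I_k -> 'rV[R]_d) (i0 : 'I_k) :
  (k <= d)%N -> forall (w : 'rV[R]_d) (dl : R), 0 <= dl ->
  exists w', (forall i, sqdist w' (c i) = sqdist w (c i) + dl) /\ sqdist w' w <= dl.
Proof.
move=> kd w dl dl0; have [u A0 ker] := kernel_vec c i0 kd.
case: (lerP 0 ((\sum_a w 0 a * u 0 a) - \sum_a c i0 0 a * u 0 a)) => hB.
  exact: realize_aux A0 ker hB dl0.
apply: (@realize_aux _ _ _ c i0 (- u)) => //.
- by under eq_bigr do rewrite mxE sqrrN.
- move=> i; under eq_bigr do rewrite mxE mulrN.
  by rewrite sumrN ker; under [RHS]eq_bigr do rewrite mxE mulrN; rewrite sumrN.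
- under eq_bigr do rewrite mxE mulrN.
  under [X in _ <= _ - X]eq_bigr do rewrite mxE mulrN.
  rewrite !sumrN; lra.
Qed.

Lemma sqdist_tri2 (R : realType) (d : nat) (x y z : 'rV[R]_d) :
  sqdist x z <= 2 * sqdist x y + 2 * sqdist y z.
Proof.
rewrite /sqdist !mulr_sumr -big_split /=; apply: ler_sum => a _.
have := sqr_ge0 (x 0 a - 2 * y 0 a + z 0 a); nra.
Qed.

Lemma comb_real (R : realType) (d k : nat) (c : 'I_k -> 'rV[R]_d) (i0 : 'I_k)
  (w1 w2 : 'rV[R]_d) (m : R) : (k <= d)%N -> 0 <= m <= 1 ->
  exists w, (forall i, sqdist w (c i) = m * sqdist w1 (c i) + (1 - m) * sqdist w2 (c i))
    /\ sqdist w (m *: w1 + (1 - m) *: w2) <= m * (1 - m) * sqdist w1 w2.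
Proof.
move=> kd /andP [m0 m1].
have dl0 : 0 <= m * (1 - m) * sqdist w1 w2.
  by apply: mulr_ge0; [apply: mulr_ge0 => //; lra | apply: sqdist_ge0].
have [w [H1 H2]] := realize c i0 kd (m *: w1 + (1 - m) *: w2) dl0.
by exists w; split => // i; rewrite H1 sqdist_comb; ring.
Qed.

Lemma near_real (R : realType) (d k : nat) (c : 'I_k -> 'rV[R]_d) (i0 : 'I_k)
  (p y : 'rV[R]_d) (eps : R) : (k <= d)%N -> 0 < eps ->
  exists2 m : R, 0 < m < 1 & exists w,
    (forall i, sqdist w (c i) = m * sqdist y (c i) + (1 - m) * sqdist p (c i))
    /\ sqdist w p < eps ^+ 2.
Proof.
move=> kd e0; set D := sqdist y p; set e2 := eps ^+ 2.
have D0 : 0 <= D by apply: sqdist_ge0.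
have e20 : 0 < e2 by rewrite /e2 exprn_gt0.
have den : 0 < 4 * D + e2 + 1 by lra.
set m := e2 / (4 * D + e2 + 1).
have m0 : 0 < m by rewrite divr_gt0.
have m1 : m < 1 by rewrite ltr_pdivrMr // mul1r; lra.
exists m; first by rewrite m0 m1.
have mm : 0 <= m <= 1 by rewrite !ltW.
have [w [H1 H2]] := comb_real c i0 y p kd mm.
exists w; split => //.
have Hb : sqdist (m *: y + (1 - m) *: p) p = m ^+ 2 * D.
  by rewrite /D /sqdist mulr_sumr; apply: eq_bigr => a _; rewrite !mxE; ring.
have T := sqdist_tri2 w (m *: y + (1 - m) *: p) p.
rewrite Hb in T.
have K : 2 * m * D < e2.
  have -> : 2 * m * D = (2 * D * e2) / (4 * D + e2 + 1).
    by rewrite /m; field; rewrite gt_eqF.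
  rewrite ltr_pdivrMr //; nra.
have : 2 * (m * (1 - m) * D) + 2 * (m ^+ 2 * D) = 2 * m * D by ring.
rewrite -/D in H2; lra.
Qed.

Lemma hull (R : realType) (k : nat) (C : ('I_k -> R) -> Prop) :
  (forall a b (m : R), C a -> C b -> 0 <= m <= 1 -> C (fun i => m * a i + (1 - m) * b i)) ->
  forall n (J : {set 'I_k}) (P : ('I_k -> R) -> Prop), #|J| = n ->
  (forall a b (m : R), P a -> P b -> 0 <= m <= 1 -> P (fun i => m * a i + (1 - m) * b i)) ->
  (forall S : {set 'I_k}, S \subset J -> exists v, [/\ C v, P v & forall i, i \in J -> (v i < 0 <-> i \in S)]) ->
  exists v, [/\ C v, P v & forall i, i \in J -> v i = 0].
Proof.
move=> Cc; elim=> [|n IH] J P cJ Pc H.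
  have [v [Cv Pv _]] := H set0 (sub0set _).
  by exists v; split => // i; rewrite (cards0_eq cJ) inE.
have [i0 i0J] : exists i0, i0 \in J.
  by apply/set0Pn; rewrite -card_gt0 cJ.
have cJ' : #|J :\ i0| = n by move: cJ; rewrite (cardsD1 i0) i0J add1n => -[].
have [v [Cv [Pv v0] Hv]] : exists v, [/\ C v, (P v /\ v i0 = 0) &
    forall i, i \in J :\ i0 -> v i = 0].
  apply: (IH _ (fun v => P v /\ v i0 = 0) cJ').
    move=> a b m [Pa a0] [Pb b0] hm; split; first exact: Pc.
    by rewrite /= a0 b0; ring.
  move=> S SJ'.
  have SJ : S \subset J := subset_trans SJ' (subD1set J i0).
  have SJ2 : i0 |: S \subset J by rewrite subUset sub1set i0J SJ.
  have [a [Ca Pa Sa]] := H (i0 |: S) SJ2.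
  have [b [Cb Pb Sb]] := H S SJ.
  have a0 : a i0 < 0 by apply/(Sa i0 i0J); rewrite setU11.
  have i0S : i0 \notin S.
    by apply/negP => /(subsetP SJ'); rewrite !inE eqxx.
  have b0 : 0 <= b i0.
    by rewrite leNgt; apply/negP => /(Sb i0 i0J); apply/negP.
  have dpos : 0 < b i0 - a i0 by lra.
  set m := b i0 / (b i0 - a i0).
  have m0 : 0 <= m by rewrite divr_ge0 // ltW.
  have m1 : m <= 1 by rewrite ler_pdivrMr // mul1r; lra.
  have mm : 0 <= m <= 1 by rewrite m0 m1.
  exists (fun i => m * a i + (1 - m) * b i); split.
  - exact: Cc.
  - split; first exact: Pc.
    by rewrite /m; field; rewrite gt_eqF.
  - move=> i; rewrite !inE => /andP [ii0 iJ].
    have : (i \in i0 |: S) = (i \in S) by rewrite !inE (negbTE ii0).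
    move=> E; have Ha := Sa i iJ; have Hb := Sb i iJ; rewrite E in Ha.
    case iS: (i \in S).
      have ha : a i < 0 by apply/Ha.
      have hb : b i < 0 by apply/Hb.
      split=> //= _; nra.
    have ha : 0 <= a i by rewrite leNgt; apply/negP => /Ha; rewrite iS.
    have hb : 0 <= b i by rewrite leNgt; apply/negP => /Hb; rewrite iS.
    split=> //= hc; have hc2 : 0 <= m * a i + (1 - m) * b i by nra.
    by move: hc; rewrite ltNge hc2.
exists v; split => // i iJ; case: (eqVneq i i0) => [->|ne] //.
by apply: Hv; rewrite !inE ne.
Qed.

Lemma posmin (R : realType) (k : nat) (A : {set 'I_k}) (g : 'I_k -> R) :
  (forall i, i \in A -> 0 < g i) -> exists2 dl : R, 0 < dl & forall i, i \in A -> dl < g i.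
Proof.
move=> gp; set T := \sum_(i in A) (g i)^-1.
have T0 : 0 <= T by apply: sumr_ge0 => i iA; rewrite invr_ge0 ltW // gp.
have T1 : 0 < 1 + T by lra.
exists (1 / (1 + T)); first by rewrite divr_gt0.
move=> i iA; rewrite ltr_pdivrMr //.
have gi := gp i iA.
have Ti : (g i)^-1 <= T.
  rewrite /T (bigD1 i) //= lerDl; apply: sumr_ge0 => j /andP [jA _].
  by rewrite invr_ge0 ltW // gp.
have : g i * (g i)^-1 = 1 by rewrite mulfV // gt_eqF.
nra.
Qed.

Theorem lemma3p2 (R : realType) (d k : nat)
    (c : 'I_k -> 'rV[R]_d) (r : 'I_k -> R) :
  (1 <= k)%N -> (k <= d)%N ->
  (forall i, 0 < r i) ->
  independent (fun i => open_ball (c i) (r i)) ->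
  forall sigma tau : {set 'I_k}, sigma \subset tau ->
  exists p : 'rV[R]_d,
    pierceable (fun i => open_ball (c i) (r i)) sigma tau p.
Proof.
move=> k1 kd rpos ind sigma tau st.
pose i0 : 'I_k := Ordinal k1.
set J := tau :\: sigma.
pose C := fun v : 'I_k -> R => exists w, forall i, v i = sqdist w (c i) - r i ^+ 2.
pose P := fun v : 'I_k -> R =>
  (forall i, i \in sigma -> v i < 0) /\ (forall i, i \notin tau -> 0 < v i).
have Cc : forall a b (m : R), C a -> C b -> 0 <= m <= 1 ->
    C (fun i => m * a i + (1 - m) * b i).
  move=> a b m [w1 H1] [w2 H2] hm.
  have [w [Hw _]] := comb_real c i0 w1 w2 kd hm.
  by exists w => i; rewrite Hw H1 H2; ring.
have Pc : forall a b (m : R), P a -> P b -> 0 <= m <= 1 ->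
    P (fun i => m * a i + (1 - m) * b i).
  move=> a b m [Ha1 Ha2] [Hb1 Hb2] /andP [m0 m1]; split => i hi /=.
    have := Ha1 i hi; have := Hb1 i hi; nra.
  have := Ha2 i hi; have := Hb2 i hi; nra.
have pts : forall S : {set 'I_k}, S \subset J -> exists v,
    [/\ C v, P v & forall i, i \in J -> (v i < 0 <-> i \in S)].
  move=> S SJ.
  have [y Hy] := ind (sigma :|: S).
  have [dl dl0 Hdl] := posmin (A := sigma :|: S)
     (g := fun i => r i ^+ 2 - sqdist y (c i))
     (fun i hi => ltac:(rewrite subr_gt0; exact: (proj1 (Hy i) hi))).
  have [w [Hw _]] := realize c i0 kd y (ltW dl0).
  have gt : forall i, i \in tau :|: ~: tau -> i \notin sigma :|: S ->
     0 < sqdist w (c i) - r i ^+ 2.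
    move=> i _ hi; have : ~ (sqdist y (c i) < r i ^+ 2).
      by move/(proj2 (Hy i)); apply/negP.
    move/negP; rewrite -leNgt Hw => h; lra.
  have lt : forall i, i \in sigma :|: S -> sqdist w (c i) - r i ^+ 2 < 0.
    move=> i hi; have := Hdl i hi; rewrite Hw /=; lra.
  exists (fun i => sqdist w (c i) - r i ^+ 2); split.
  - by exists w.
  - split => i hi.
      by apply: lt; rewrite inE hi.
    apply: gt; first by rewrite !inE orbN.
    rewrite inE negb_or; apply/andP; split.
      by apply: contra hi; apply: (subsetP st).
    apply: contra hi => /(subsetP SJ); rewrite inE => /andP [_ ->].
    by [].
  - move=> i iJ; split.
      move=> h; case iS: (i \in S) => //.
      have : i \notin sigma :|: S.
        by move: iJ; rewrite !inE iS orbF => /andP [hh _].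
      move/(gt i (ltac:(by rewrite !inE orbN))) => h'; lra.
    by move=> iS; apply: lt; rewrite inE iS orbT.
have [v [[p Hp] [Pv1 Pv2] HJ]] := hull Cc (erefl #|J|) Pc pts.
have hs : forall i, i \in sigma -> sqdist p (c i) < r i ^+ 2.
  by move=> i hi; have := Pv1 i hi; rewrite Hp; lra.
have ht : forall i, i \notin tau -> r i ^+ 2 < sqdist p (c i).
  by move=> i hi; have := Pv2 i hi; rewrite Hp; lra.
have hj : forall i, i \in J -> sqdist p (c i) = r i ^+ 2.
  by move=> i hi; have := HJ i hi; rewrite Hp => /eqP; rewrite subr_eq0 => /eqP.
exists p; split => // gamma _; split.
- move=> near; split.
    apply/subsetP => i iS.
    have g0 : 0 < r i ^+ 2 - sqdist p (c i) by rewrite subr_gt0 hs.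
    have [e e0 He] := sqdist_cont p (c i) g0.
    have [y [Ay Dy]] := near e e0.
    apply/(Ay i); rewrite /open_ball.
    by have /andP [_ h] := He y Dy; move: h; rewrite addrC subrK.
  apply/subsetP => i iG; apply/negPn/negP => iT.
  have g0 : 0 < sqdist p (c i) - r i ^+ 2 by rewrite subr_gt0 ht.
  have [e e0 He] := sqdist_cont p (c i) g0.
  have [y [Ay Dy]] := near e e0.
  have := proj1 (Ay i) iG; rewrite /open_ball.
  have /andP [h _] := He y Dy; move: h; rewrite opprB addrC subrK => h h'.
  lra.
- move=> [sg gt] eps e0.
  have [y Ay] := ind gamma.
  have [m /andP [m0 m1] [w [Hw Dw]]] := near_real c i0 p y kd e0.
  exists w; split => // i; rewrite /open_ball Hw; split.
    move=> iG; have hy : sqdist y (c i) < r i ^+ 2 by apply/(Ay i).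
    case iS: (i \in sigma).
      have := hs i iS; nra.
    have : i \in J by rewrite !inE iS (subsetP gt).
    move/hj => ->; nra.
  move=> h; apply/negPn/negP => iG.
  have hy : r i ^+ 2 <= sqdist y (c i).
    by rewrite leNgt; apply/negP => /(Ay i); apply/negP.
  case iT: (i \in tau).
    have iS : i \notin sigma by apply: contra iG; apply: (subsetP sg).
    have : i \in J by rewrite !inE iS iT.
    move/hj => E; rewrite E in h; nra.
  have := ht i (negbT iT); nra.
Qed.
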